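(* Consider the family of Slim Fly networks with $u=0$ (equivalently, $q=4w$ is a prime power, i.e. $q=2^m$ with $m\ge 2$), laid out with the subgroup layout, with concentration $p=\lfloor k'/2\rfloor+\kappa$ for a fixed integer constant $\kappa$, and with fixed positive constants $b$, $|VC|$, $L$, $H$. Let $N=N_r\,p$ be the number of nodes, $M$ the average wire length, and $\Delta=\Delta_{eb}$ the total edge-buffer size (all defined below). Then, as $q\to\infty$, $$M=\Theta\!\left(\sqrt[3]{N}\right)\qquad\text{and}\qquad \Delta=\Theta\!\left(N\sqrt[3]{N}\right).$$
   Context: Slim Fly graph (MMS graph). Let $q$ be a prime power with $q=4w+u$, $w\in\mathbb{N}$, $u\in\{-1,0,1\}$; here $u=0$. Let $\mathbb{F}_q$ be the finite field with $q$ elements and $\xi$ a primitive element (every nonzero element is a power of $\xi$). For $u=0$ define the generator sets $X=\{1,\xi^2,\xi^4,\dots,\xi^{q-2}\}$ and $X'=\{\xi,\xi^3,\dots,\xi^{q-1}\}$. The routers are labeled $[G|a,b]$ with $G\in\{0,1\}$ and $a,b\in\mathbb{F}_q$ (identified with $\{1,\dots,q\}$ via a fixed bijection), so there are $N_r=2q^2$ routers. Routers are connected as follows: $[0|a,b]\sim[0|a,b']$ iff $b-b'\in X$; $[1|m,c]\sim[1|m,c']$ iff $c-c'\in X'$; $[0|a,b]\sim[1|m,c]$ iff $b=ma+c$ (arithmetic in $\mathbb{F}_q$). Each router then has network radix $k'=(3q-u)/2=3q/2$. Each router has $p$ attached nodes, so $N=N_r p=2q^2p$. Subgroup layout. Routers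 are placed on a 2D integer grid: router $[G|a,b]$ (with $a,b\in\{1,\dots,q\}$) is placed at coordinates $(x,y)=(b,\,2a-(1-G))$, giving a $q\times 2q$ rectangle. Index the routers $1,\dots,N_r$ and let $\varepsilon_{ij}=1$ if routers $i,j$ are connected and $0$ otherwise. Average wire length: $M=\dfrac{\sum_{i=1}^{N_r}\sum_{j=1}^{N_r}\varepsilon_{ij}(|x_i-x_j|+|y_i-y_j|)}{\sum_{i=1}^{N_r}\sum_{j=1}^{N_r}\varepsilon_{ij}}$. Total edge-buffer size: $\Delta_{eb}=\sum_{i=1}^{N_r}\sum_{j=1}^{N_r}\varepsilon_{ij}\,\delta_{ij}$, where $\delta_{ij}=T_{ij}\,b\,|VC|/L$ and $T_{ij}=2\left\lceil (|x_i-x_j|+|y_i-y_j|)/H\right\rceil+3$; here $b$ (link bandwidth), $|VC|$ (virtual channels per link), $L$ (flit size) and $H$ (grid hops traversed per link cycle, $H\ge 1$) are fixed positive constants independent of $q$. *)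

(* Defs.v *)
From HB Require Import structures.
From mathcomp Require Import all_boot all_order all_algebra all_field.
From mathcomp Require Import all_classical all_reals all_analysis.
Set Implicit Arguments. Unset Strict Implicit. Unset Printing Implicit Defensive.
Import Order.TTheory GRing.Theory Num.Theory.
Local Open Scope ring_scope.

Section SlimFly.
Variable F : finFieldType.
Variable xi : F.

Definition primitive_elt : Prop := forall x : F, x != 0 -> exists k : nat, x = xi ^+ k.

Definition SF_X : {set F} := [set xi ^+ (2 * i) | i : 'I_(#|F| %/ 2)].
Definition SF_X' : {set F} := [set xi ^+ (2 * i + 1) | i : 'I_(#|F| %/ 2)].

(* Router [G|a,b] is encoded as (G, a, b) with G = false for 0 and true for 1. *)
Definition router := (bool * F * F)%type.

Definition sf_adj (r s : router) : bool :=
  match r, s with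
  | (false, a, b), (false, a', b') => (a == a') && (b - b' \in SF_X)
  | (true, m, c), (true, m', c') => (m == m') && (c - c' \in SF_X')
  | (false, a, b), (true, m, c) => b == m * a + c
  | (true, m, c), (false, a, b) => b == m * a + c
  end.

Variable R : realType.
Variable sigma : F -> nat.

Definition xcoord (r : router) : R := (sigma r.2)%:R.
Definition ycoord (r : router) : R :=
  2 * (sigma r.1.2)%:R - (if r.1.1 then 0 else 1).

Definition wdist (r s : router) : R :=
  `|xcoord r - xcoord s| + `|ycoord r - ycoord s|.

Definition eps (r s : router) : R := (sf_adj r s)%:R.

Definition avg_wire_length : R :=
  (\sum_(r : router) \sum_(s : router) eps r s * wdist r s) /
  (\sum_(r : router) \sum_(s : router) eps r s).

Definition T_link (H : R) (r s : router) : R :=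
  2 * (Num.ceil (wdist r s / H))%:~R + 3.

Definition edge_buffer_total (b VC L H : R) : R :=
  \sum_(r : router) \sum_(s : router) eps r s * (T_link H r s * b * VC / L).

(* k' = (3q - u)/2 with u = 0; p = floor(k'/2) + kappa; N = N_r * p = 2 q^2 p *)
Definition netradix : nat := (3 * #|F|) %/ 2.
Definition concentration (kappa : int) : int := ((netradix %/ 2)%N)%:Z + kappa.
Definition num_nodes (kappa : int) : R :=
  (#|[set: router]|)%:R * (concentration kappa)%:~R.

End SlimFly.

(* Main.v *)
Require Import Defs.
From HB Require Import structures.
From mathcomp Require Import all_boot all_order all_algebra all_field.
From mathcomp Require Import all_classical all_reals all_analysis.
From mathcomp Require Import ring lra zify.
Import Order.TTheory GRing.Theory Num.Theory.
Local Open Scope ring_scope.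

Lemma sum_eq1 (R : realType) (T : finType) (c : T) :
  \sum_(y : T) ((y == c)%:R : R) = 1.
Proof.
rewrite (bigD1 c) //= eqxx big1 ?addr0 // => y /negbTE -> //.
Qed.

Lemma sum_router (R : realType) (F : finFieldType) (f : router F -> R) :
  \sum_(r : router F) f r = \sum_(g : bool) \sum_(a : F) \sum_(b : F) f ((g, a), b).
Proof.
rewrite pair_bigA /= pair_bigA /=.
by apply: eq_bigr => -[[g a] b].
Qed.

Lemma norm_bound (R : realType) (x y K : R) :
  0 <= x <= K -> 0 <= y <= K -> `|x - y| <= K.
Proof. move=> /andP[? ?] /andP[? ?]; rewrite ler_norml; apply/andP; split; lra. Qed.

Lemma two_ineq (R : realType) (i j : nat) :
  `|i%:R - j%:R| <= `|2 * i%:R - 1 - 2 * j%:R : R|.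
Proof.
have h1 := ler_norm (2 * i%:R - 1 - 2 * j%:R : R).
have h2 := ler_norm (- (2 * i%:R - 1 - 2 * j%:R : R)). rewrite normrN in h2.
case: (ltngtP i j) => h.
- have : (i.+1%:R <= j%:R :> R) by rewrite ler_nat.
  rewrite -addn1 natrD => h3.
  rewrite ler0_norm; [lra | lra].
- have : (j.+1%:R <= i%:R :> R) by rewrite ler_nat.
  rewrite -addn1 natrD => h3.
  rewrite ger0_norm; [lra | lra].
- subst; rewrite subrr normr0; exact: normr_ge0.
Qed.
Lemma count_near (T : finType) (s : T -> nat) (inj : injective s) (c k : nat) :
  (#|[set m | (s m < c + k)%N && (c < s m + k)%N]| <= 2 * k)%N.
Proof.
set S := [set m | _]. rewrite cardE.
rewrite -(size_map s) -(size_iota (c - k) (2 * k)).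
apply: uniq_leq_size; first by rewrite (map_inj_uniq inj) enum_uniq.
move=> x /mapP [m]; rewrite mem_enum inE => /andP [h1 h2] ->.
rewrite mem_iota; apply/andP; split; lia.
Qed.

Lemma sum_ind (R : realType) (T : finType) (A : {set T}) :
  \sum_(m : T) ((m \in A)%:R : R) = #|A|%:R.
Proof.
rewrite -sum1_card natr_sum [RHS]big_mkcond /=.
by apply: eq_bigr => m _; case: (m \in A).
Qed.

Lemma sum_far (R : realType) (T : finType) (s : T -> nat) (inj : injective s) (c k : nat) :
  k%:R * (#|T|%:R - 2 * k%:R) <= \sum_(m : T) `|(s m)%:R - c%:R : R|.
Proof.
set S := [set m | (s m < c + k)%N && (c < s m + k)%N].
have hS := @count_near T s inj c k.
have hC := cardsC S.
have e : (#|~: S|%:R : R) = #|T|%:R - #|S|%:R by rewrite -hC natrD; ring.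
have hS' : (#|S|%:R <= (2 * k)%:R :> R) by rewrite ler_nat.
rewrite natrM in hS'.
apply: (@le_trans _ _ (\sum_(m : T) ((m \in ~: S)%:R * k%:R))).
  rewrite -mulr_suml sum_ind e.
  have : 0 <= (k%:R : R) by [].
  nra.
apply: ler_sum => m _.
rewrite inE; case hm: (m \in S); first by rewrite mul0r normr_ge0.
rewrite mul1r.
move: hm; rewrite inE => /negbT; rewrite negb_and -!leqNgt => /orP [] h.
- have : ((c + k)%:R <= (s m)%:R :> R) by rewrite ler_nat.
  rewrite natrD => h'.
  have := ler_norm ((s m)%:R - c%:R : R); lra.
- have : ((s m + k)%:R <= c%:R :> R) by rewrite ler_nat.
  rewrite natrD => h'.
  have := ler_norm (- ((s m)%:R - c%:R) : R); rewrite normrN; lra.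
Qed.
Section Core.
Variables (F : finFieldType) (xi : F) (R : realType) (sg : F -> nat).
Hypothesis inj : injective sg.
Hypothesis rng : forall x, (1 <= sg x <= #|F|)%N.

Let q : R := #|F|%:R.

Lemma xc_bound r : 0 <= xcoord R sg r <= q.
Proof.
rewrite /xcoord /q; have /andP [h1 h2] := rng r.2.
by rewrite ler0n /= ler_nat.
Qed.

Lemma yc_bound r : 0 <= ycoord R sg r <= 2 * q.
Proof.
rewrite /ycoord /q; have /andP [h1 h2] := rng r.1.2.
have : (1%:R <= (sg r.1.2)%:R :> R) by rewrite ler_nat.
have : ((sg r.1.2)%:R <= #|F|%:R :> R) by rewrite ler_nat.
case: r.1.1 => /= ? ?; apply/andP; split; lra.
Qed.

Lemma wdist_ge0 r s : 0 <= wdist R sg r s.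
Proof. by rewrite /wdist addr_ge0. Qed.

Lemma wdist_le r s : wdist R sg r s <= 3 * q.
Proof.
rewrite /wdist.
have := @norm_bound R _ _ _ (xc_bound r) (xc_bound s).
have := @norm_bound R _ _ _ (yc_bound r) (yc_bound s).
lra.
Qed.

Lemma eps01 r s : 0 <= eps xi R r s <= 1.
Proof. rewrite /eps; case: (sf_adj xi r s) => /=; rewrite ?lexx ?ler01 //. Qed.

Lemma leb_R (P Q : bool) : (P -> Q) -> (P%:R : R) <= Q%:R.
Proof. by case: P; case: Q => // /(_ isT). Qed.

Lemma sum_q1 (f : F -> F) : \sum_(x : F) \sum_(y : F) ((y == f x)%:R : R) <= q.
Proof.
rewrite (eq_bigr (fun _ => 1)); last by move=> x _; apply: sum_eq1.
by rewrite sumr_const /q -[in X in X <= _]mulr_natl mulr1.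
Qed.

Lemma sum_q2 (a : F) : \sum_(x : F) \sum_(y : F) ((x == a)%:R : R) <= q.
Proof.
rewrite exchange_big /= (eq_bigr (fun _ => 1)); last by move=> x _; apply: sum_eq1.
by rewrite sumr_const /q -[in X in X <= _]mulr_natl mulr1.
Qed.

Lemma degree r : \sum_(s : router F) eps xi R r s <= 2 * q.
Proof.
rewrite sum_router big_bool /=.
rewrite (_ : 2 * q = q + q); last by ring.
case: r => -[[] a] b; apply: lerD.
- apply: le_trans (sum_q2 a); apply: ler_sum => x _; apply: ler_sum => y _.
  by apply: leb_R => /= /andP [/eqP -> _].
- apply: le_trans (sum_q1 (fun x => a * x + b)); apply: ler_sum => x _; apply: ler_sum => y _.
  by apply: leb_R => /=.
- apply: le_trans (sum_q1 (fun x => b - x * a)); apply: ler_sum => x _; apply: ler_sum => y _.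
  by apply: leb_R => /= /eqP ->; rewrite addrC addKr.
- apply: le_trans (sum_q2 a); apply: ler_sum => x _; apply: ler_sum => y _.
  by apply: leb_R => /= /andP [/eqP -> _].
Qed.
End Core.
Section Core2.
Variables (F : finFieldType) (xi : F) (R : realType) (sg : F -> nat).
Hypothesis inj : injective sg.
Hypothesis rng : forall x, (1 <= sg x <= #|F|)%N.
Let q : R := #|F|%:R.

Lemma addge0r (x y z : R) : 0 <= z -> x <= y -> x <= y + z.
Proof. lra. Qed.
Lemma addge0l (x y z : R) : 0 <= z -> x <= y -> x <= z + y.
Proof. lra. Qed.

Lemma row_ge0 r : 0 <= \sum_(s : router F) eps xi R r s * wdist R sg r s.
Proof.
apply: sumr_ge0 => s _; apply: mulr_ge0; [|exact: wdist_ge0].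
by have /andP [] := eps01 F xi R r s.
Qed.

Lemma row_lower a b k :
  k%:R * (q - 2 * k%:R) <=
  \sum_(s : router F) eps xi R ((false, a), b) s * wdist R sg ((false, a), b) s.
Proof.
rewrite /q; apply: (le_trans (sum_far R F sg inj (sg a) k)).
rewrite sum_router big_bool /=.
have h0 : 0 <= \sum_(a0 : F) \sum_(b0 : F) eps xi R (false, a, b) (false, a0, b0)
   * wdist R sg (false, a, b) (false, a0, b0).
  apply: sumr_ge0 => x _; apply: sumr_ge0 => y _; apply: mulr_ge0; [|exact: wdist_ge0].
  by have /andP [] := eps01 F xi R (false, a, b) (false, x, y).
apply: addge0r; [exact: h0|].
apply: ler_sum => x _.
rewrite (bigD1 (b - x * a)) //=.
have h1 : 0 <= \sum_(i | i != b - x * a) eps xi R (false, a, b) (true, x, i)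
   * wdist R sg (false, a, b) (true, x, i).
  apply: sumr_ge0 => y _; apply: mulr_ge0; [|exact: wdist_ge0].
  by have /andP [] := eps01 F xi R (false, a, b) (true, x, y).
apply: addge0r; [exact: h1|].
rewrite /eps /= [x * a + _]addrC subrK eqxx mul1r /wdist /ycoord /=.
rewrite distrC.
have := two_ineq R (sg a) (sg x).
have := normr_ge0 (xcoord R sg (false, a, b) - xcoord R sg (true, x, b - x * a)).
rewrite subr0 => h3 h4; exact: addge0l.
Qed.

Definition numer := \sum_(r : router F) \sum_(s : router F) eps xi R r s * wdist R sg r s.
Definition denom := \sum_(r : router F) \sum_(s : router F) eps xi R r s.

Lemma numer_lower k : q * q * (k%:R * (q - 2 * k%:R)) <= numer.
Proof.
rewrite /numer sum_router big_bool /=.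
have h0 : 0 <= \sum_(a0 : F) \sum_(b0 : F) \sum_s eps xi R (true, a0, b0) s
   * wdist R sg (true, a0, b0) s.
  by apply: sumr_ge0 => x _; apply: sumr_ge0 => y _; apply: row_ge0.
apply: addge0l; [exact: h0|].
apply: (@le_trans _ _ (\sum_(a0 : F) \sum_(b0 : F) (k%:R * (q - 2 * k%:R)))).
  by rewrite !sumr_const -mulrnA -[_ *+ (_ * _)%N]mulr_natl /q -natrM; exact: lexx.
by apply: ler_sum => x _; apply: ler_sum => y _; apply: row_lower.
Qed.

Lemma numer_upper : numer <= 3 * q * denom.
Proof.
rewrite /numer /denom mulr_sumr; apply: ler_sum => r _.
rewrite mulr_sumr; apply: ler_sum => s _.
have /andP [e0 e1] := eps01 F xi R r s.
rewrite [3 * q * _]mulrC; exact: (ler_wpM2l e0 (wdist_le F R sg rng r s)).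
Qed.

Lemma denom_upper : denom <= q * q * q * 4.
Proof.
rewrite /denom.
apply: (@le_trans _ _ (\sum_(r : router F) 2 * q)); first by apply: ler_sum => r _; exact: (degree F xi R r).
rewrite sumr_const -[_ *+ _]mulr_natr card_prod card_prod card_bool /q !natrM.
set X := (#|F|%:R : R); have -> : 2 * X * (2 * X * X) = X * X * X * 4 by ring.
exact: lexx.
Qed.
End Core2.
Section Core3.
Variables (F : finFieldType) (xi : F) (R : realType) (sg : F -> nat).
Hypothesis rng : forall x, (1 <= sg x <= #|F|)%N.
Variables (b VC L H : R).
Hypotheses (hb : 0 < b) (hVC : 0 < VC) (hL : 0 < L) (hH : 1 <= H).
Let q : R := #|F|%:R.
Let K : R := b * VC / L.

Lemma K_gt0 : 0 < K.
Proof. by rewrite /K divr_gt0 // mulr_gt0. Qed.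

Lemma q_ge1 : (0 < #|F|)%N -> 1 <= q.
Proof. by move=> h; rewrite /q ler1n. Qed.

Lemma T_lower r s : 2 * wdist R sg r s / H <= T_link sg H r s.
Proof.
rewrite /T_link.
have := ceil_ge (wdist R sg r s / H).
set c := (Num.ceil _)%:~R. move=> h. rewrite -mulrA. lra.
Qed.

Lemma T_upper r s : (0 < #|F|)%N -> T_link sg H r s <= 11 * q.
Proof.
move=> hF; have h1 := q_ge1 hF.
rewrite /T_link.
have := ceil_itv (wdist R sg r s / H).
rewrite intrB /= => /andP [h2 _].
have hw := wdist_le F R sg rng r s. have hw0 := wdist_ge0 F R sg r s.
have h3 : wdist R sg r s / H <= wdist R sg r s.
  have hH0 : 0 < H by apply: lt_le_trans hH.
  rewrite (ler_pdivrMr _ _ hH0).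
  rewrite -{1}[wdist R sg r s]mulr1; apply: ler_wpM2l => //.
move: h2 h3 hw hw0; rewrite -/q.
set c := (Num.ceil _)%:~R. set w := wdist R sg r s. set z := w / H.
move=> *. lra.
Qed.

Lemma ebt_lower : 2 * K / H * numer F xi R sg <= edge_buffer_total xi sg b VC L H.
Proof.
rewrite /numer /edge_buffer_total mulr_sumr; apply: ler_sum => r _.
rewrite mulr_sumr; apply: ler_sum => s _.
have /andP [e0 _] := eps01 F xi R r s.
have hT := T_lower r s.
rewrite mulrCA; apply: ler_wpM2l => //.
rewrite /K (_ : T_link sg H r s * b * VC / L = T_link sg H r s * (b * VC / L)); last by rewrite !mulrA.
have hK := K_gt0. rewrite /K in hK.
move: hT hK. set T := T_link _ _ _ _. set k := b * VC / L. set w := wdist _ _ _ _.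
move=> hT hK.
rewrite (_ : 2 * k / H * w = 2 * w / H * k); last by ring.
by apply: ler_wpM2r => //; apply: ltW.
Qed.

Lemma ebt_upper : (0 < #|F|)%N ->
  edge_buffer_total xi sg b VC L H <= 11 * q * K * denom F xi R.
Proof.
move=> hF.
rewrite /denom /edge_buffer_total mulr_sumr; apply: ler_sum => r _.
rewrite mulr_sumr; apply: ler_sum => s _.
have /andP [e0 _] := eps01 F xi R r s.
have hT := T_upper r s hF.
rewrite [11 * q * K * _]mulrC; apply: ler_wpM2l => //.
rewrite /K (_ : T_link sg H r s * b * VC / L = T_link sg H r s * (b * VC / L)); last by rewrite !mulrA.
have hK := K_gt0. rewrite /K in hK.
by apply: ler_wpM2r => //; apply: ltW.
Qed.
End Core3.
Lemma final_M (R : realType) (q n d rho : R) : 1 <= q -> q*q*q*q/8 <= n -> n <= 3 * q * d ->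
  d <= q*q*q*4 -> q <= rho <= 2 * q -> 1/64 * rho <= n / d <= 3 * rho.
Proof.
move=> hq hn hnd hd /andP [r1 r2].
have q4 : 0 < q*q*q*q by rewrite !mulr_gt0 //; lra.
have dpos : 0 < d.
  have : 0 < 3 * q * d by lra.
  rewrite pmulr_rgt0 //; lra.
apply/andP; split.
- rewrite ler_pdivlMr //.
  have : q / 32 * d <= q / 32 * (q*q*q*4) by apply: ler_wpM2l => //; lra.
  have : rho * d <= 2 * q * d by apply: ler_wpM2r; lra.
  lra.
- rewrite ler_pdivrMr //.
  have : 3 * q * d <= 3 * rho * d by apply: ler_wpM2r; lra.
  lra.
Qed.

Lemma final_D (R : realType) (q n d N rho K H D : R) : 1 <= q -> 0 < K -> 1 <= H ->
  q*q*q*q/8 <= n -> d <= q*q*q*4 -> 2 * K / H * n <= D -> D <= 11 * q * K * d ->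
  q*q*q*q <= N * rho <= 4 * (q*q*q*q) ->
  K / (16 * H) * (N * rho) <= D <= 44 * K * (N * rho).
Proof.
move=> hq hK hH hn hd hD1 hD2 /andP [r1 r2].
have hH0 : 0 < H by apply: lt_le_trans hH.
have q4 : 0 < q*q*q*q by rewrite !mulr_gt0 //; lra.
have e3 : 11 * q * K * d <= 11 * q * K * (q*q*q*4).
  apply: ler_wpM2l => //; rewrite !mulr_ge0 //; lra.
have e4 : 11 * q * K * (q*q*q*4) = 44 * K * (q*q*q*q) by ring.
set Q := q*q*q*q in hn hd q4 r1 r2 e4 *.
apply/andP; split.
- apply: le_trans hD1.
  have e1 : K / (16 * H) * (N * rho) <= K / (16 * H) * (4 * Q).
    apply: ler_wpM2l => //; apply: divr_ge0; lra.
  have e2 : 2 * K / H * (Q / 8) <= 2 * K / H * n.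
    apply: ler_wpM2l => //; apply: divr_ge0; lra.
  apply: le_trans e1 _; apply: le_trans _ e2.
  have -> : K / (16 * H) * (4 * Q) = 2 * K / H * (Q / 8).
    by field; rewrite gt_eqF.
  exact: lexx.
- apply: le_trans hD2 _; apply: le_trans e3 _; rewrite e4.
  apply: ler_wpM2l => //; lra.
Qed.
Lemma cube_root (R : realType) (x : R) : 0 <= x -> (x * x * x) `^ (3%:R^-1) = x.
Proof.
move=> hx.
have -> : x * x * x = x ^+ 3 by rewrite !exprS expr0 mulr1 mulrA.
rewrite -powR_mulrn // -powRrM mulfV ?powRr1 // pnatr_eq0.
Qed.

Lemma rho_bounds (R : realType) (q N : R) : 0 <= q -> q*q*q <= N <= 2 * (q*q*q) ->
  q <= N `^ (3%:R^-1) <= 2 * q.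
Proof.
move=> hq /andP [h1 h2].
have q3 : 0 <= q*q*q by rewrite !mulr_ge0.
apply/andP; split.
- rewrite -{1}(@cube_root R q hq); apply: ge0_ler_powR => //; rewrite ?invr_ge0 ?nnegrE //; lra.
- have h2q : 0 <= 2 * q by lra.
  rewrite -(@cube_root R _ h2q); apply: ge0_ler_powR => //; rewrite ?invr_ge0 ?nnegrE //; try lra.
Qed.

Lemma N_bounds (F : finFieldType) (R : realType) (kappa : int) (k : nat) :
  #|F| = (4 * k)%N -> (`|kappa| <= k)%N ->
  (#|F|%:R * #|F|%:R * #|F|%:R : R) <= num_nodes F R kappa <= 2 * (#|F|%:R * #|F|%:R * #|F|%:R).
Proof.
move=> hF hk.
rewrite /num_nodes /concentration /netradix cardsT card_prod card_prod card_bool.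
have -> : ((3 * #|F|) %/ 2 %/ 2)%N = (3 * k)%N by rewrite hF; lia.
rewrite intrD /= hF !natrM.
have hk' : `|kappa%:~R : R| <= k%:R by rewrite -intr_norm -natr_absz ler_nat.
move: hk'; rewrite ler_norml => /andP [a1 a2].
set K := k%:R. set z := kappa%:~R.
have hK : 0 <= K by rewrite /K.
have e : (3 * k)%:~R = 3 * K :> R by rewrite /K -natrM.
rewrite e.
have kk : 0 <= K * K by rewrite mulr_ge0.
apply/andP; split; nra.
Qed.
Lemma NM_bounds (R : realType) (q N rho : R) : 0 <= q -> q*q*q <= N <= 2 * (q*q*q) ->
  q <= rho <= 2 * q -> q*q*q*q <= N * rho <= 4 * (q*q*q*q).
Proof.
move=> hq /andP [a1 a2] /andP [b1 b2].
have q3 : 0 <= q*q*q by rewrite !mulr_ge0.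
apply/andP; split.
- apply: ler_pM => //.
- have -> : 4 * (q*q*q*q) = (2 * (q*q*q)) * (2 * q) by ring.
  apply: ler_pM => //; lra.
Qed.

Theorem mainTheorem1 (R : realType) (kappa : int) (b VC L H : R)
  (hb : 0 < b) (hVC : 0 < VC) (hL : 0 < L) (hH : 1 <= H)
  (F : nat -> finFieldType)
  (hF : forall m : nat, (2 <= m)%N -> #|F m| = (2 ^ m)%N)
  (xi : forall m : nat, F m)
  (hxi : forall m : nat, (2 <= m)%N -> primitive_elt (xi m))
  (sigma : forall m : nat, F m -> nat)
  (hsig_inj : forall m : nat, (2 <= m)%N -> injective (sigma m))
  (hsig_rng : forall (m : nat) (x : F m), (2 <= m)%N -> (1 <= sigma m x <= 2 ^ m)%N) :
  (exists (c1 c2 : R) (m0 : nat), 0 < c1 /\ 0 < c2 /\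
     forall m : nat, (m0 <= m)%N ->
       c1 * (num_nodes (F m) R kappa) `^ (3%:R^-1)
         <= avg_wire_length (xi m) R (sigma m)
       /\ avg_wire_length (xi m) R (sigma m)
         <= c2 * (num_nodes (F m) R kappa) `^ (3%:R^-1))
  /\
  (exists (c1 c2 : R) (m0 : nat), 0 < c1 /\ 0 < c2 /\
     forall m : nat, (m0 <= m)%N ->
       c1 * (num_nodes (F m) R kappa * (num_nodes (F m) R kappa) `^ (3%:R^-1))
         <= edge_buffer_total (xi m) (sigma m) b VC L H
       /\ edge_buffer_total (xi m) (sigma m) b VC L H
         <= c2 * (num_nodes (F m) R kappa * (num_nodes (F m) R kappa) `^ (3%:R^-1))).
Proof.
have key : forall m, (`|kappa| + 2 <= m)%N ->
  let q := (#|F m|%:R : R) in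
  (1 <= q) /\ (q*q*q*q/8 <= numer (F m) (xi m) R (sigma m)) /\
      (numer (F m) (xi m) R (sigma m) <= 3 * q * denom (F m) (xi m) R) /\
      (denom (F m) (xi m) R <= q*q*q*4) /\
      (0 < #|F m|)%N /\ (forall x, (1 <= sigma m x <= #|F m|)%N) /\
      (q*q*q <= num_nodes (F m) R kappa <= 2 * (q*q*q)).
  move=> m hm q.
  have hm2 : (2 <= m)%N by lia.
  pose k := (2 ^ (m - 2))%N.
  have hF' : #|F m| = (4 * k)%N by rewrite hF // /k -[4%N]/(2 ^ 2)%N -expnD subnKC.
  have hk : (`|kappa| <= k)%N.
    apply: leq_trans (ltnW (ltn_expl (m - 2) (isT : (1 < 2)%N))); lia.
  have hk0 : (0 < k)%N by rewrite /k expn_gt0.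
  have rng : forall x, (1 <= sigma m x <= #|F m|)%N by move=> x; rewrite hF //; exact: hsig_rng.
  have hqK : q = 4 * k%:R by rewrite /q hF' natrM.
  have hK1 : 1 <= (k%:R : R) by rewrite ler1n.
  split; [|split; [|split; [|split; [|split; [|split]]]]].
  - rewrite hqK; lra.
  - apply: le_trans (numer_lower (F m) (xi m) R (sigma m) (hsig_inj m hm2) k).
    rewrite -/q hqK. lra.
  - exact: numer_upper.
  - exact: denom_upper.
  - by rewrite hF' muln_gt0.
  - exact: rng.
  - exact: (@N_bounds (F m) R kappa k hF' hk).
split.
- exists (1/64), 3, (`|kappa| + 2)%N; split; first lra; split; first lra.
  move=> m hm; have [hq [hn [hnd [hd [_ [_ hN]]]]]] := key m hm.
  have hq0 : 0 <= (#|F m|%:R : R) by [].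
  have := @final_M R _ _ _ _ hq hn hnd hd (@rho_bounds R _ _ hq0 hN).
  by rewrite /avg_wire_length -/(numer _ _ _ _) -/(denom _ _ _) => /andP [].
- exists ((b * VC / L) / (16 * H)), (44 * (b * VC / L)), (`|kappa| + 2)%N.
  have hK : 0 < b * VC / L by rewrite divr_gt0 // mulr_gt0.
  have hH0 : 0 < H by apply: lt_le_trans hH.
  split; first by rewrite divr_gt0 // mulr_gt0.
  split; first by rewrite mulr_gt0.
  move=> m hm; have [hq [hn [hnd [hd [hF0 [rng hN]]]]]] := key m hm.
  have hq0 : 0 <= (#|F m|%:R : R) by [].
  have hNr := @NM_bounds R _ _ _ hq0 hN (@rho_bounds R _ _ hq0 hN).
  have h1 := ebt_lower (F m) (xi m) R (sigma m) b VC L H hb hVC hL.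
  have h2 := ebt_upper (F m) (xi m) R (sigma m) rng b VC L H hb hVC hL hH hF0.
  have := @final_D R _ _ _ _ _ _ _ _ hq hK hH hn hd h1 h2 hNr.
  by move=> /andP [].
Qed.
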